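(* Let $L$ be the operator on $l^2$ mapping $(\xi_1,\xi_2,\xi_3,\dots)$ to $(0,\dots,0,\xi_{k+1},\xi_{k+2},\dots)$ (first $k$ entries replaced by $0$), and let $Y$ be a bounded operator on $l^2$ such that (1) $(\xi,Y\xi)\ge0$ for all $\xi\in l^2$, and (2) if $L\xi=0$ and $(\xi,Y\xi)=0$ then $\xi=0$. Then there exists $\kappa>0$ such that $(\xi,(L+Y)\xi)\ge\kappa(\xi,\xi)$ for all $\xi\in l^2$.
   Context: $l^2$ is the Hilbert space of complex square-summable sequences with inner product $(\xi,\eta)=\sum_j\bar\xi_j\eta_j$; $k$ is a fixed nonnegative integer. *)

(* Defs.v *)
From Stdlib Require Import Reals Lra Arith.
From Coquelicot Require Import Coquelicot.
Open Scope R_scope.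

(** Complex sequences (indexed from 0). *)
Definition seqC := nat -> C.

Definition in_l2 (x : seqC) : Prop := ex_series (fun j => (Cmod (x j)) ^ 2).

(** Inner product (x,y) = sum conj(x_j) y_j, antilinear in the first slot.
    Real and imaginary parts are summed separately (both converge on l^2). *)
Definition l2_ip (x y : seqC) : C :=
  (Series (fun j => Re (Cmult (Cconj (x j)) (y j))),
   Series (fun j => Im (Cmult (Cconj (x j)) (y j)))).

Definition l2_norm (x : seqC) : R := sqrt (Series (fun j => (Cmod (x j)) ^ 2)).

Definition opL (k : nat) (x : seqC) : seqC :=
  fun j => if (j <? k)%nat then RtoC 0 else x j.

(** Bounded (linear) operator on l^2, given as a map on sequences whose
    behaviour is only constrained on l^2. *)
Definition bounded_op (Y : seqC -> seqC) : Prop :=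
  (forall x, in_l2 x -> in_l2 (Y x)) /\
  (forall (a b : C) (x y : seqC), in_l2 x -> in_l2 y ->
     forall j, Y (fun i => Cplus (Cmult a (x i)) (Cmult b (y i))) j
               = Cplus (Cmult a (Y x j)) (Cmult b (Y y j))) /\
  (exists M : R, forall x, in_l2 x -> l2_norm (Y x) <= M * l2_norm x).

(** Order on complex numbers: z >= w iff z - w is real and nonnegative. *)
Definition Cge (z w : C) : Prop := Im z = Im w /\ Re w <= Re z.

(* Main.v *)
Require Import Defs.
From Stdlib Require Import Reals.
From Coquelicot Require Import Coquelicot.
From Stdlib Require Import Lra Lia Arith FunctionalExtensionality.
Open Scope R_scope.


Fixpoint Lf (m:nat) (g:nat->nat->R) (u:nat->R) (j:nat) : R :=
  match m with O => 0 | S m' => Lf m' g u j + u m' * g m' j end.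
Fixpoint Qf (m:nat) (g:nat->nat->R) (u:nat->R) : R :=
  match m with O => 0 | S m' => Qf m' g u + 2 * u m' * Lf m' g u m' + u m' ^ 2 * g m' m' end.
Fixpoint Nf (m:nat) (u:nat->R) : R :=
  match m with O => 0 | S m' => Nf m' u + u m' ^ 2 end.
Fixpoint Gf (m:nat) (g:nat->nat->R) (j:nat) : R :=
  match m with O => 0 | S m' => Gf m' g j + g m' j ^ 2 end.

Lemma Lf_ext m g u u' j : (forall i, (i < m)%nat -> u i = u' i) -> Lf m g u j = Lf m g u' j.
Proof. induction m; simpl; intros H; auto. rewrite IHm by (intros; apply H; lia). rewrite H by lia; auto. Qed.
Lemma Qf_ext m g u u' : (forall i, (i < m)%nat -> u i = u' i) -> Qf m g u = Qf m g u'.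
Proof. induction m; simpl; intros H; auto. rewrite IHm by (intros; apply H; lia).
  rewrite (Lf_ext m g u u') by (intros; apply H; lia). rewrite H by lia; auto. Qed.
Lemma Nf_ext m u u' : (forall i, (i < m)%nat -> u i = u' i) -> Nf m u = Nf m u'.
Proof. induction m; simpl; intros H; auto. rewrite IHm by (intros; apply H; lia). rewrite H by lia; auto. Qed.
Lemma Lf_zero m g u j : (forall i, (i < m)%nat -> u i = 0) -> Lf m g u j = 0.
Proof. induction m; simpl; intros H; auto. rewrite IHm by (intros; apply H; lia). rewrite H by lia; ring. Qed.
Lemma Qf_zero m g u : (forall i, (i < m)%nat -> u i = 0) -> Qf m g u = 0.
Proof. induction m; simpl; intros H; auto. rewrite IHm by (intros; apply H; lia).
  rewrite H by lia; ring. Qed.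
Lemma Nf_ge0 m u : 0 <= Nf m u.
Proof. induction m; simpl; nra. Qed.
Lemma Gf_ge0 m g j : 0 <= Gf m g j.
Proof. induction m; simpl; nra. Qed.

Lemma Lf_g' p g m u j : g m m <> 0 ->
  Lf p (fun i j => g i j - g i m * g j m / g m m) u j = Lf p g u j - Lf p g u m * g j m / g m m.
Proof. intros Ha. induction p; simpl. field; auto. rewrite IHp. field; auto. Qed.
Lemma Qf_g' p g m u : g m m <> 0 ->
  Qf p (fun i j => g i j - g i m * g j m / g m m) u = Qf p g u - (Lf p g u m) ^ 2 / g m m.
Proof. intros Ha. induction p; simpl. field; auto. rewrite IHp, Lf_g' by auto. field; auto. Qed.

Lemma aux_cs A N G a b : 0 <= N -> 0 <= G -> A^2 <= N * G -> 2 * A * a * b <= N * b^2 + G * a^2.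
Proof. intros HN HG HA.
  assert (H1 : (2*A*a*b)^2 <= (N*b^2 + G*a^2)^2).
  { assert (0 <= (N*b^2 - G*a^2)^2) by apply pow2_ge_0.
    assert (A^2 * (a^2*b^2) <= N*G*(a^2*b^2)) by (apply Rmult_le_compat_r; nra).
    nra. }
  assert (0 <= N*b^2 + G*a^2) by nra. nra. Qed.

Lemma Lf_cs p g u j : (Lf p g u j)^2 <= Nf p u * Gf p g j.
Proof. induction p; simpl. lra.
  pose proof (aux_cs (Lf p g u j) (Nf p u) (Gf p g j) (u p) (g p j) (Nf_ge0 p u) (Gf_ge0 p g j) IHp).
  set (L := Lf p g u j) in *. set (N := Nf p u) in *. set (G := Gf p g j) in *.
  replace ((L + u p * g p j)^2) with (L^2 + 2*L*u p*g p j + (u p * g p j)^2) by ring.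
  replace ((N + u p ^ 2) * (G + g p j ^ 2)) with (N*G + (N * g p j^2 + G * u p^2) + (u p * g p j)^2) by ring.
  lra. Qed.

Definition upd (u : nat -> R) (m : nat) (t : R) : nat -> R := fun i => if Nat.eqb i m then t else u i.
Arguments upd : simpl never.

Lemma fin_pos m : forall g, (forall u, (exists i, (i < m)%nat /\ u i <> 0) -> 0 < Qf m g u) ->
  exists c, 0 < c /\ forall u, c * Nf m u <= Qf m g u.
Proof.
  induction m; intros g Hg.
  - exists 1; split; [lra|]. intros; simpl; lra.
  - set (a := g m m).
    assert (Ha : 0 < a).
    { pose (u := fun i => if Nat.eqb i m then 1 else 0).
      assert (Hu : forall i, (i < m)%nat -> u i = 0).
      { intros i Hi; unfold u. destruct (Nat.eqb_spec i m); [lia|auto]. }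
      specialize (Hg u). simpl in Hg. rewrite Qf_zero, Lf_zero in Hg by auto.
      unfold u in Hg; rewrite Nat.eqb_refl in Hg. unfold a.
      assert (0 < 0 + 2 * 1 * 0 + 1 ^ 2 * g m m) by (apply Hg; exists m; split; [lia | unfold u; rewrite Nat.eqb_refl; lra]).
      lra. }
    assert (Ha0 : g m m <> 0) by (fold a; lra).
    destruct (IHm (fun i j => g i j - g i m * g j m / g m m)) as [c' [Hc' Hc'u]].
    { intros u [i [Hi Hui]].
      rewrite Qf_g' by auto.
      pose (t := - Lf m g u m / a).
      set (v := upd u m t).
      assert (Hv : forall i, (i < m)%nat -> v i = u i).
      { intros i' Hi'; unfold v, upd. destruct (Nat.eqb_spec i' m); [lia|auto]. }
      specialize (Hg v). simpl in Hg.
      rewrite (Qf_ext m g v u), (Lf_ext m g v u) in Hg by auto.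
      unfold v, upd in Hg; rewrite Nat.eqb_refl in Hg.
      assert (E : Qf m g u + 2 * t * Lf m g u m + t ^ 2 * g m m = Qf m g u - Lf m g u m ^ 2 / g m m)
        by (unfold t; fold a; field; lra).
      rewrite <- E. apply Hg. exists i; split; [lia|]. destruct (Nat.eqb_spec i m); [lia|auto]. }
    set (G := Gf m g m).
    assert (HG : 0 <= G) by apply Gf_ge0.
    set (c := Rmin (a/2) (c' * a^2 / (a^2 + 2*G))).
    assert (Hc1 : c <= a/2) by apply Rmin_l.
    assert (Hc2 : c * (a^2 + 2*G) <= c' * a^2).
    { assert (c <= c' * a^2 / (a^2 + 2*G)) by apply Rmin_r.
      assert (0 < a^2 + 2*G) by nra.
      apply (Rmult_le_compat_r (a^2 + 2*G)) in H; [|lra].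
      replace (c' * a ^ 2 / (a ^ 2 + 2 * G) * (a ^ 2 + 2 * G)) with (c' * a^2) in H by (field; lra). lra. }
    assert (Hc0 : 0 < c).
    { unfold c. apply Rmin_glb_lt; [lra|]. pose proof (pow_lt a 2 Ha). apply Rdiv_lt_0_compat; [apply Rmult_lt_0_compat|]; lra. }
    exists c; split; auto.
    intros u. change (c * (Nf m u + u m ^ 2) <= Qf m g u + 2 * u m * Lf m g u m + u m ^ 2 * g m m).
    specialize (Hc'u u). rewrite Qf_g' in Hc'u by auto. fold a in Hc'u |- *.
    set (L := Lf m g u m) in *. set (N := Nf m u) in *. set (um := u m) in *.
    assert (HL : L^2 <= N * G) by apply Lf_cs.
    assert (HN : 0 <= N) by apply Nf_ge0.
    set (w := L + a * um).
    assert (Hi : a^2 * um^2 <= 2 * w^2 + 2 * N * G).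
    { replace (a^2*um^2) with ((w-L)^2) by (unfold w; ring).
      assert (0 <= (w+L)^2) by apply pow2_ge_0.
      replace (2 * w^2 + 2 * N * G) with ((w-L)^2 + (w+L)^2 + 2*(N*G - L^2)) by ring. lra. }
    assert (E : Qf m g u + 2 * um * L + um ^ 2 * a = (Qf m g u - L^2/a) + w^2 / a)
      by (unfold w; field; lra).
    rewrite E.
    assert (Goal2 : a^2 * (c * (N + um^2)) <= a^2 * (c' * N + w^2/a)).
    { assert (c * (a^2 * um^2) <= c * (2 * w^2 + 2*N*G)) by (apply Rmult_le_compat_l; lra).
      assert (c * N * (a^2 + 2*G) <= c' * a^2 * N) by nra.
      assert (2 * c * w^2 <= a * w^2) by nra.
      replace (a^2 * (c' * N + w^2/a)) with (c' * a^2 * N + a * w^2) by (field; lra).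
      nra. }
    assert (c * (N + um^2) <= c' * N + w^2/a).
    { apply (Rmult_le_reg_l (a^2)); [nra|lra]. }
    lra.
Qed.


Ltac ceq := apply injective_projections; simpl; ring.

Lemma Cmod2 z : Cmod z ^ 2 = fst z ^ 2 + snd z ^ 2.
Proof. unfold Cmod. rewrite pow2_sqrt; auto.
  apply Rplus_le_le_0_compat; apply pow2_ge_0. Qed.

Lemma ex_lin (a b : nat -> R) al be : ex_series a -> ex_series b -> ex_series (fun n => al * a n + be * b n).
Proof. intros Ha Hb.
  apply (ex_series_ext (fun n => plus (scal al (a n)) (scal be (b n)))); [intros; reflexivity|].
  apply (@ex_series_plus R_AbsRing R_NormedModule); apply (@ex_series_scal_l R_AbsRing R_NormedModule); auto. Qed.

Lemma exR (a b : nat -> R) : (forall n, a n = b n) -> ex_series a -> ex_series b.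
Proof. intros H. apply (@ex_series_ext R_AbsRing R_NormedModule); auto. Qed.

Lemma exle (a b : nat -> R) : (forall n, Rabs (a n) <= b n) -> ex_series b -> ex_series a.
Proof. intros H Hb. exact (@ex_series_le R_AbsRing R_CompleteNormedModule a b H Hb). Qed.

Fixpoint fs (p : nat) (f : nat -> R) : R := match p with O => 0 | S p' => fs p' f + f p' end.

Lemma sumf_fs a m : sum_f_R0 a m = fs (S m) a.
Proof. induction m; simpl. ring. rewrite IHm; simpl; ring. Qed.
Lemma fs_const a p : (forall j, (p <= j)%nat -> a j = 0) -> forall m, (p <= m)%nat -> fs m a = fs p a.
Proof. intros H m Hm. induction Hm; auto. simpl. rewrite IHHm, H by lia. ring. Qed.
Lemma fs_ext a b p : (forall j, (j < p)%nat -> a j = b j) -> fs p a = fs p b.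
Proof. induction p; simpl; intros H; auto. rewrite IHp by (intros; apply H; lia). rewrite H by lia; auto. Qed.

Lemma is_series_fin a p : (forall j, (p <= j)%nat -> a j = 0) -> is_series a (fs p a).
Proof. intros H. apply is_series_Reals. intros eps He. exists p. intros n Hn.
  rewrite sumf_fs, (fs_const a p H) by lia. unfold R_dist. replace (fs p a - fs p a) with 0 by ring. rewrite Rabs_R0; auto. Qed.

Lemma Series_zero (a : nat -> R) : (forall n, a n = 0) -> Series a = 0.
Proof. intros H. apply is_series_unique. apply (is_series_fin a 0); auto. Qed.

Lemma Series_le_gen a b : ex_series a -> ex_series b -> (forall n, a n <= b n) -> Series a <= Series b.
Proof. intros Ha Hb H.
  assert (Series (fun n => 0) <= Series (fun n => b n - a n)).
  { apply Series_le. intros; split; [lra| specialize (H n); lra].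
    apply (exR (fun n => 1 * b n + (-1) * a n)); [intros; ring| apply ex_lin; auto]. }
  rewrite Series_zero in H0 by auto. rewrite Series_minus in H0 by auto. lra. Qed.

Lemma sq_ge0 z : 0 <= Cmod z ^ 2.
Proof. apply pow2_ge_0. Qed.

Lemma l2_comb x y s : in_l2 x -> in_l2 y -> in_l2 (fun j => Cplus (x j) (Cmult (RtoC s) (y j))).
Proof. unfold in_l2; intros Hx Hy.
  apply exle with (b := fun n => 2 * Cmod (x n)^2 + (2*s^2) * Cmod (y n)^2); [|apply ex_lin; auto].
  intros n. change (Rabs (Cmod (Cplus (x n) (Cmult (RtoC s) (y n))) ^ 2)) with (Rabs (Cmod (Cplus (x n) (Cmult (RtoC s) (y n))) ^ 2)).
  rewrite Rabs_pos_eq by apply sq_ge0. rewrite !Cmod2. destruct (x n) as [a1 a2]; destruct (y n) as [b1 b2]; simpl.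
  pose proof (pow2_ge_0 (a1 - s*b1)). pose proof (pow2_ge_0 (a2 - s*b2)).
  assert (E : 2 * (a1 ^ 2 + a2 ^ 2) + 2 * s ^ 2 * (b1 ^ 2 + b2 ^ 2) - ((a1 + (s * b1 - 0 * b2)) ^ 2 + (a2 + (s * b2 + 0 * b1)) ^ 2) = (a1 - s*b1)^2 + (a2 - s*b2)^2) by ring.
  lra. Qed.

Lemma l2_fin x p : (forall j, (p <= j)%nat -> x j = RtoC 0) -> in_l2 x.
Proof. intros H. exists (fs p (fun j => Cmod (x j) ^ 2)). apply is_series_fin. intros j Hj. rewrite H by auto.
  rewrite Cmod_0; ring. Qed.

Lemma l2_le x y : in_l2 x -> (forall j, Cmod (y j) <= Cmod (x j)) -> in_l2 y.
Proof. unfold in_l2; intros Hx H.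
  apply exle with (b := fun n => Cmod (x n)^2); auto.
  intros n. change (Rabs (Cmod (y n) ^ 2)) with (Rabs (Cmod (y n) ^ 2)).
  rewrite Rabs_pos_eq by apply sq_ge0. specialize (H n). pose proof (Cmod_ge_0 (y n)). nra. Qed.

Lemma ex_re x y : in_l2 x -> in_l2 y -> ex_series (fun j => Re (Cmult (Cconj (x j)) (y j))).
Proof. unfold in_l2; intros Hx Hy.
  apply exle with (b := fun n => (1/2) * Cmod (x n)^2 + (1/2) * Cmod (y n)^2); [|apply ex_lin; auto].
  intros n. change (Rabs (Re (Cmult (Cconj (x n)) (y n)))) with (Rabs (Re (Cmult (Cconj (x n)) (y n)))).
  rewrite !Cmod2. destruct (x n) as [a1 a2]; destruct (y n) as [b1 b2]; simpl.
  pose proof (pow2_ge_0 (a1-b1)); pose proof (pow2_ge_0 (a2-b2)); pose proof (pow2_ge_0 (a1+b1)); pose proof (pow2_ge_0 (a2+b2)).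
  apply Rabs_le; split; nra. Qed.

Lemma ex_im x y : in_l2 x -> in_l2 y -> ex_series (fun j => Im (Cmult (Cconj (x j)) (y j))).
Proof. unfold in_l2; intros Hx Hy.
  apply exle with (b := fun n => (1/2) * Cmod (x n)^2 + (1/2) * Cmod (y n)^2); [|apply ex_lin; auto].
  intros n. change (Rabs (Im (Cmult (Cconj (x n)) (y n)))) with (Rabs (Im (Cmult (Cconj (x n)) (y n)))).
  rewrite !Cmod2. destruct (x n) as [a1 a2]; destruct (y n) as [b1 b2]; simpl.
  pose proof (pow2_ge_0 (a1-b2)); pose proof (pow2_ge_0 (a2+b1)); pose proof (pow2_ge_0 (a1+b2)); pose proof (pow2_ge_0 (a2-b1)).
  apply Rabs_le; split; nra. Qed.

Definition P (x y : seqC) : R := Series (fun j => Re (Cmult (Cconj (x j)) (y j))).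
Definition Sn (x : seqC) : R := Series (fun j => Cmod (x j) ^ 2).

Lemma Sn_ge0 x : in_l2 x -> 0 <= Sn x.
Proof. intros H. unfold Sn. rewrite <- (Series_zero (fun _ => 0)) by auto.
  apply Series_le_gen; auto. exists 0. apply (is_series_fin _ 0); auto. intros; apply sq_ge0. Qed.

Lemma P_bound x y z s K : in_l2 x -> in_l2 y -> in_l2 z -> 0 < s -> Sn y <= K * Sn z ->
  2 * Rabs (P x y) <= s * Sn x + (K / s) * Sn z.
Proof. intros Hx Hy Hz Hs HK.
  assert (H1 : 2 * Rabs (P x y) <= s * Sn x + / s * Sn y).
  { assert (Eh : Series (fun n => s * Cmod (x n)^2 + / s * Cmod (y n)^2) = s * Sn x + / s * Sn y).
    { unfold Sn. rewrite Series_plus, !Series_scal_l; auto.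
      apply (exR (fun n => s * Cmod (x n) ^ 2 + 0 * 0)); [intros; ring|]. apply ex_lin; auto. exists 0; apply (is_series_fin _ 0); auto.
      apply (exR (fun n => / s * Cmod (y n) ^ 2 + 0 * 0)); [intros; ring|]. apply ex_lin; auto. exists 0; apply (is_series_fin _ 0); auto. }
    assert (Hex : ex_series (fun n => s * Cmod (x n)^2 + / s * Cmod (y n)^2)) by (apply ex_lin; auto).
    assert (Hp : forall n, 2 * Rabs (Re (Cmult (Cconj (x n)) (y n))) <= s * Cmod (x n)^2 + / s * Cmod (y n)^2).
    { intros n. rewrite !Cmod2. destruct (x n) as [a1 a2]; destruct (y n) as [b1 b2]; simpl.
      assert (Hs' : s * / s = 1) by (field; lra). assert (0 < / s) by (apply Rinv_0_lt_compat; auto).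
      assert (0 <= (s*a1 - b1)^2 * / s) by (apply Rmult_le_pos; [apply pow2_ge_0|lra]).
      assert (0 <= (s*a2 - b2)^2 * / s) by (apply Rmult_le_pos; [apply pow2_ge_0|lra]).
      assert (0 <= (s*a1 + b1)^2 * / s) by (apply Rmult_le_pos; [apply pow2_ge_0|lra]).
      assert (0 <= (s*a2 + b2)^2 * / s) by (apply Rmult_le_pos; [apply pow2_ge_0|lra]).
      assert (E1 : (s*a1 - b1)^2 * / s + (s*a2 - b2)^2 * / s = s * (a1^2 + a2^2) + /s * (b1^2+b2^2) - 2 * (a1*b1 + a2*b2) ) by (field; lra).
      assert (E2 : (s*a1 + b1)^2 * / s + (s*a2 + b2)^2 * / s = s * (a1^2 + a2^2) + /s * (b1^2+b2^2) + 2 * (a1*b1 + a2*b2) ) by (field; lra).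
      replace (a1 * b1 - - a2 * b2) with (a1*b1 + a2*b2) by ring.
      destruct (Rcase_abs (a1*b1+a2*b2)) as [h|h]; [rewrite Rabs_left by lra | rewrite Rabs_pos_eq by lra]; lra. }
    unfold P.
    assert (- (s * Sn x + / s * Sn y) <= 2 * Series (fun j => Re (Cmult (Cconj (x j)) (y j))) <= (s * Sn x + / s * Sn y));
    [split|destruct (Rcase_abs (Series (fun j => Re (Cmult (Cconj (x j)) (y j))))) as [h|h]; [rewrite Rabs_left by lra | rewrite Rabs_pos_eq by lra]; lra].
    - 
      rewrite <- Eh, <- Series_opp, <- Series_scal_l. apply Series_le_gen.
      + apply (exR (fun n => (-1) * (s * Cmod (x n) ^ 2 + / s * Cmod (y n) ^ 2) + 0 * 0)); [intros; ring|]. apply ex_lin; auto. exists 0; apply (is_series_fin _ 0); auto.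
      + apply (exR (fun n => 2 * Re (Cmult (Cconj (x n)) (y n)) + 0 * 0)); [intros; ring|]. apply ex_lin; auto using ex_re. exists 0; apply (is_series_fin _ 0); auto.
      + intros n. specialize (Hp n). destruct (proj1 (Rabs_le_between (Re (Cmult (Cconj (x n)) (y n))) _) (Rle_refl _)). lra.
    -       rewrite <- Eh, <- Series_scal_l. apply Series_le_gen; auto.
      + apply (exR (fun n => 2 * Re (Cmult (Cconj (x n)) (y n)) + 0 * 0)); [intros; ring|]. apply ex_lin; auto using ex_re. exists 0; apply (is_series_fin _ 0); auto.
      + intros n. specialize (Hp n). destruct (proj1 (Rabs_le_between (Re (Cmult (Cconj (x n)) (y n))) _) (Rle_refl _)). lra. }
  assert (/ s * Sn y <= / s * (K * Sn z)) by (apply Rmult_le_compat_l; [left; apply Rinv_0_lt_compat|]; auto).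
  replace (K / s * Sn z) with (/ s * (K * Sn z)) by (field; lra). lra.
Qed.


Lemma ex_scal (a : nat -> R) c : ex_series a -> ex_series (fun n => c * a n).
Proof. intros H. apply (exR (fun n => c * a n + 0 * 0)); [intros; ring|]. apply ex_lin; auto.
  exists 0; apply (is_series_fin _ 0); auto. Qed.

Lemma P_lin1 x y z s : in_l2 x -> in_l2 y -> in_l2 z ->
  P (fun j => Cplus (x j) (Cmult (RtoC s) (y j))) z = P x z + s * P y z.
Proof. intros Hx Hy Hz. unfold P. rewrite <- Series_scal_l, <- Series_plus by (auto using ex_re, ex_scal).
  apply Series_ext; intros n. destruct (x n), (y n), (z n); simpl; ring. Qed.
Lemma P_lin2 x y z s : in_l2 x -> in_l2 y -> in_l2 z ->
  P z (fun j => Cplus (x j) (Cmult (RtoC s) (y j))) = P z x + s * P z y.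
Proof. intros Hx Hy Hz. unfold P. rewrite <- Series_scal_l, <- Series_plus by (auto using ex_re, ex_scal).
  apply Series_ext; intros n. destruct (x n), (y n), (z n); simpl; ring. Qed.

Lemma P_zero_l z : P (fun _ => RtoC 0) z = 0.
Proof. unfold P. apply Series_zero. intros; destruct (z n); simpl; ring. Qed.
Lemma P_zero_r z : P z (fun _ => RtoC 0) = 0.
Proof. unfold P. apply Series_zero. intros; destruct (z n); simpl; ring. Qed.

Lemma l2_zero : in_l2 (fun _ => RtoC 0).
Proof. apply (l2_fin _ 0); auto. Qed.

Lemma Y_lin Y (HY : bounded_op Y) x y s : in_l2 x -> in_l2 y ->
  Y (fun i => Cplus (x i) (Cmult (RtoC s) (y i))) = (fun j => Cplus (Y x j) (Cmult (RtoC s) (Y y j))).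
Proof. intros Hx Hy. destruct HY as [_ [HL _]].
  replace (fun i => Cplus (x i) (Cmult (RtoC s) (y i))) with (fun i => Cplus (Cmult (RtoC 1) (x i)) (Cmult (RtoC s) (y i)))
    by (apply functional_extensionality; intros; rewrite Cmult_1_l; auto).
  apply functional_extensionality; intros j. rewrite HL by auto. rewrite Cmult_1_l; auto. Qed.

Lemma Y_zero Y (HY : bounded_op Y) : Y (fun _ => RtoC 0) = (fun _ => RtoC 0).
Proof. destruct HY as [_ [HL _]].
  replace (fun _ : nat => RtoC 0) with (fun i : nat => Cplus (Cmult (RtoC 0) (RtoC 0)) (Cmult (RtoC 0) (RtoC 0))) at 1
    by (apply functional_extensionality; intros; ceq).
  apply functional_extensionality; intros j.
  rewrite (HL (RtoC 0) (RtoC 0) (fun _ => RtoC 0) (fun _ => RtoC 0) l2_zero l2_zero). ceq. Qed.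

Definition q (Y : seqC -> seqC) x := P x (Y x).

Lemma q_expand Y (HY : bounded_op Y) c b s : in_l2 c -> in_l2 b ->
  q Y (fun j => Cplus (c j) (Cmult (RtoC s) (b j))) = q Y c + s * (P c (Y b) + P b (Y c)) + s^2 * q Y b.
Proof. intros Hc Hb. pose proof (proj1 HY c Hc). pose proof (proj1 HY b Hb). unfold q.
  rewrite (Y_lin Y HY) by auto. rewrite P_lin1 by (auto using l2_comb). rewrite !P_lin2 by auto. ring. Qed.

Definition bv (i : nat) : seqC := fun j =>
  if Nat.eqb j (Nat.div2 i) then (if Nat.even i then RtoC 1 else (0,1)) else RtoC 0.

Fixpoint comb (m : nat) (u : nat -> R) : seqC :=
  match m with O => fun _ => RtoC 0
  | S m' => fun j => Cplus (comb m' u j) (Cmult (RtoC (u m')) (bv m' j)) end.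

Lemma comb_zero m u j : (m <= j)%nat -> comb m u j = RtoC 0.
Proof. induction m; simpl; intros H; auto. rewrite IHm by lia. unfold bv.
  destruct (Nat.eqb_spec j (Nat.div2 m)). pose proof (Nat.le_div2_diag_l m). lia. ceq. Qed.

Lemma comb_l2 m u : in_l2 (comb m u).
Proof. apply (l2_fin _ m). intros; apply comb_zero; auto. Qed.

Lemma bv_l2 i : in_l2 (bv i).
Proof. apply (l2_fin _ (S i)). intros j Hj. unfold bv. destruct (Nat.eqb_spec j (Nat.div2 i)); auto.
  pose proof (Nat.le_div2_diag_l i). lia. Qed.

Definition gram Y (i j : nat) : R := (P (bv i) (Y (bv j)) + P (bv j) (Y (bv i))) / 2.

Lemma comb_L Y (HY : bounded_op Y) m u j :
  (P (comb m u) (Y (bv j)) + P (bv j) (Y (comb m u))) / 2 = Lf m (gram Y) u j.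
Proof. induction m; simpl.
  - rewrite (Y_zero Y HY), P_zero_l, P_zero_r. field.
  - pose proof (comb_l2 m u). pose proof (bv_l2 m). pose proof (bv_l2 j).
    pose proof (proj1 HY _ H1). 
    rewrite (Y_lin Y HY) by auto. rewrite P_lin1 by auto. rewrite P_lin2 by (auto; apply (proj1 HY); auto).
    rewrite <- IHm. unfold gram. field. Qed.

Lemma comb_Q Y (HY : bounded_op Y) m u : q Y (comb m u) = Qf m (gram Y) u.
Proof. induction m.
  - simpl. unfold q. rewrite (Y_zero Y HY), P_zero_l. auto.
  - change (comb (S m) u) with (fun j => Cplus (comb m u j) (Cmult (RtoC (u m)) (bv m j))).
    rewrite (q_expand Y HY) by (auto using comb_l2, bv_l2).
    change (Qf (S m) (gram Y) u) with (Qf m (gram Y) u + 2 * u m * Lf m (gram Y) u m + u m ^ 2 * gram Y m m).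
    rewrite <- (comb_L Y HY), IHm. unfold gram, q. field. Qed.


Lemma ev2 n : Nat.even (2*n) = true.
Proof. induction n; auto. replace (2 * S n)%nat with (S (S (2*n))) by lia. simpl. auto. Qed.
Lemma ev2s n : Nat.even (S (2*n)) = false.
Proof. induction n; auto. replace (S (2 * S n))%nat with (S (S (S (2*n)))) by lia. simpl. auto. Qed.

Lemma comb_formula p u j : comb (2*p) u j = if Nat.ltb j p then (u (2*j)%nat, u (S (2*j))) else RtoC 0.
Proof. revert j. induction p; intros j.
  - simpl. destruct j; auto.
  - replace (2 * S p)%nat with (S (S (2*p))) by lia. cbn [comb]. rewrite IHp. unfold bv.
    rewrite Nat.div2_double, Nat.div2_succ_double, ev2, ev2s.
    destruct (Nat.ltb_spec j p), (Nat.eqb_spec j p), (Nat.ltb_spec j (S p)); try lia; try subst j; ceq. Qed.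

Lemma Nf_formula p u : Nf (2*p) u = fs p (fun j => u (2*j)%nat ^ 2 + u (S (2*j)) ^ 2).
Proof. induction p; auto. replace (2 * S p)%nat with (S (S (2*p))) by lia. cbn [Nf fs]. rewrite IHp. ring. Qed.

Lemma final_real c E Sv Sw qx : 0 < c -> 0 < E -> 0 <= Sv -> 0 <= Sw -> 0 <= qx ->
  (5/8)*c*Sv - 3*E*Sw <= qx ->
  Rmin ((5/8)*(1/(1+6*E))*c) (1/2) * (Sv+Sw) <= Sw + qx.
Proof. intros Hc HE HSv HSw Hq H.
  set (l := 1/(1+6*E)).
  assert (Hl1 : l * (1 + 6*E) = 1) by (unfold l; field; lra).
  assert (Hl0 : 0 < l) by (unfold l; apply Rdiv_lt_0_compat; lra).
  assert (HlE : 0 <= l * E) by nra.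
  assert (Hl : l <= 1) by nra.
  assert (H1 : l * qx <= qx) by nra.
  assert (H2 : l * ((5/8)*c*Sv - 3*E*Sw) <= l * qx) by (apply Rmult_le_compat_l; lra).
  assert (H3 : 3 * (l * E) <= 1/2) by lra.
  assert (H4 : 0 <= (1/2 - 3*(l*E)) * Sw) by (apply Rmult_le_pos; lra).
  set (k1 := Rmin ((5/8)*l*c) (1/2)).
  assert (K1 : k1 <= (5/8)*l*c) by apply Rmin_l.
  assert (K2 : k1 <= 1/2) by apply Rmin_r.
  assert (K3 : k1 * Sv <= (5/8)*l*c * Sv) by (apply Rmult_le_compat_r; lra).
  assert (K4 : k1 * Sw <= 1/2 * Sw) by (apply Rmult_le_compat_r; lra).
  nra.
Qed.


Theorem lemma1 (k : nat) (Y : seqC -> seqC) (HY : bounded_op Y)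
  (H1 : forall x, in_l2 x -> Cge (l2_ip x (Y x)) (RtoC 0))
  (H2 : forall x, in_l2 x -> (forall j, opL k x j = RtoC 0) ->
        l2_ip x (Y x) = RtoC 0 -> forall j, x j = RtoC 0) :
  exists kappa : R, 0 < kappa /\
    forall x, in_l2 x ->
      Cge (l2_ip x (fun j => Cplus (opL k x j) (Y x j)))
          (Cmult (RtoC kappa) (l2_ip x x)).
Proof.
  pose proof HY as [HYl2 [_ [M HM]]].
  assert (Hq0 : forall z, in_l2 z -> Series (fun j => Im (Cmult (Cconj (z j)) (Y z j))) = 0 /\ 0 <= q Y z).
  { intros z Hz. destruct (H1 z Hz) as [Him Hre]. split; [exact Him| exact Hre]. }
  assert (Hpos : forall u, (exists i, (i < 2*k)%nat /\ u i <> 0) -> 0 < Qf (2*k) (gram Y) u).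
  { intros u [i [Hi Hu]]. rewrite <- (comb_Q Y HY).
    set (z := comb (2*k) u).
    assert (Hz : in_l2 z) by apply comb_l2.
    destruct (Hq0 z Hz) as [Him Hre].
    destruct (Rle_lt_or_eq_dec 0 (q Y z) Hre) as [Hlt|Heq]; auto.
    exfalso.
    assert (Hzero : forall j, z j = RtoC 0).
    { apply H2; auto.
      - intros j; unfold opL. destruct (Nat.ltb_spec j k); auto.
        unfold z; rewrite comb_formula. destruct (Nat.ltb_spec j k); [lia|auto].
      - unfold l2_ip. apply injective_projections; simpl; auto. }
    pose proof (Nat.div2_odd i) as Hdi.
    set (j := Nat.div2 i) in *.
    specialize (Hzero j). unfold z in Hzero. rewrite comb_formula in Hzero.
    destruct (Nat.ltb_spec j k) as [Hjk|Hjk]; [| destruct (Nat.odd i); cbn [Nat.b2n] in Hdi; lia].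
    injection Hzero; intros E1 E2.
    destruct (Nat.odd i); cbn [Nat.b2n] in Hdi; apply Hu; rewrite Hdi.
    + replace (2 * j + 1)%nat with (S (2*j)) by lia. auto.
    + replace (2 * j + 0)%nat with (2*j)%nat by lia. auto. }
  destruct (fin_pos (2*k) (gram Y) Hpos) as [c [Hc Hcu]].
  set (M' := M^2 + 1).
  assert (HM' : 0 < M') by (unfold M'; pose proof (pow2_ge_0 M); lra).
  assert (HS : forall z, in_l2 z -> Sn (Y z) <= M' * Sn z).
  { intros z Hz. specialize (HM z Hz). unfold l2_norm in HM.
    pose proof (Sn_ge0 z Hz) as Ha. pose proof (Sn_ge0 (Y z) (HYl2 z Hz)) as Hb. unfold Sn in *.
    set (a := Series (fun j => Cmod (z j) ^ 2)) in *.
    set (b := Series (fun j => Cmod (Y z j) ^ 2)) in *.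
    pose proof (sqrt_sqrt a Ha). pose proof (sqrt_sqrt b Hb). pose proof (sqrt_pos b).
    assert (sqrt b * sqrt b <= (M * sqrt a) * (M * sqrt a)) by (apply Rmult_le_compat; lra).
    unfold M'. nra. }
  set (E := M' / c).
  assert (HE : 0 < E) by (unfold E; apply Rdiv_lt_0_compat; lra).
  exists (Rmin ((5/8)*(1/(1+6*E))*c) (1/2)). split.
  { apply Rmin_glb_lt; [|lra]. assert (0 < 1/(1+6*E)) by (apply Rdiv_lt_0_compat; lra). nra. }
  intros x Hx.
  set (v := fun j => if Nat.ltb j k then x j else RtoC 0).
  set (w := opL k x).
  assert (Hv : in_l2 v).
  { apply (l2_le x); auto. intros j; unfold v. destruct (Nat.ltb j k); [lra|]. rewrite Cmod_0; apply Cmod_ge_0. }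
  assert (Hw : in_l2 w).
  { apply (l2_le x); auto. intros j; unfold w, opL. destruct (Nat.ltb j k); [|lra]. rewrite Cmod_0; apply Cmod_ge_0. }
  assert (Hxvw : x = fun j => Cplus (v j) (Cmult (RtoC 1) (w j))).
  { apply functional_extensionality; intros j. unfold v, w, opL. destruct (Nat.ltb j k); destruct (x j); ceq. }
  set (u := fun i => if Nat.even i then fst (x (Nat.div2 i)) else snd (x (Nat.div2 i))).
  assert (Hcomb : comb (2*k) u = v).
  { apply functional_extensionality; intros j. rewrite comb_formula. unfold v.
    destruct (Nat.ltb j k); auto. unfold u. rewrite ev2, ev2s, Nat.div2_double, Nat.div2_succ_double.
    destruct (x j); auto. }
  assert (HSv : Sn v = Nf (2*k) u).
  { rewrite Nf_formula. unfold Sn. rewrite (is_series_unique _ (fs k (fun j => Cmod (v j) ^ 2))).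
    - apply fs_ext. intros j Hj. unfold v, u. destruct (Nat.ltb_spec j k); [|lia].
      rewrite ev2, ev2s, Nat.div2_double, Nat.div2_succ_double, Cmod2. auto.
    - apply is_series_fin. intros j Hj. unfold v. destruct (Nat.ltb_spec j k); [lia|]. rewrite Cmod_0; ring. }
  assert (Hqv : c * Sn v <= q Y v).
  { rewrite HSv, <- Hcomb, (comb_Q Y HY). apply Hcu. }
  destruct (Hq0 w Hw) as [_ Hqw].
  destruct (Hq0 x Hx) as [Himx Hqx].
  assert (Hexp : q Y x = q Y v + 1 * (P v (Y w) + P w (Y v)) + 1 ^ 2 * q Y w).
  { rewrite <- (q_expand Y HY) by auto. f_equal. exact Hxvw. }
  pose proof (HYl2 v Hv) as HYv. pose proof (HYl2 w Hw) as HYw.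
  assert (HA : 2 * Rabs (P v (Y w)) <= (c/2) * Sn v + (M' / (c/2)) * Sn w)
    by (apply P_bound; auto; lra).
  assert (HB : 2 * Rabs (P w (Y v)) <= (4*E) * Sn w + (M' / (4*E)) * Sn v)
    by (apply P_bound; auto; lra).
  replace (M' / (c/2)) with (2*E) in HA by (unfold E; field; lra).
  replace (M' / (4*E)) with (c/4) in HB by (unfold E; field; lra).
  assert (HSx : Sn x = Sn v + Sn w).
  { unfold Sn. rewrite <- Series_plus by auto. apply Series_ext. intros j. unfold v, w, opL.
    destruct (Nat.ltb j k); rewrite Cmod_0; ring. }
  pose proof (Sn_ge0 v Hv). pose proof (Sn_ge0 w Hw).
  pose proof (Rle_abs (P v (Y w))). pose proof (Rabs_maj2 (P v (Y w))).
  pose proof (Rle_abs (P w (Y v))). pose proof (Rabs_maj2 (P w (Y v))).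
  assert (Hq5 : (5/8)*c*Sn v - 3*E*Sn w <= q Y x) by lra.
  pose proof (final_real c E (Sn v) (Sn w) (q Y x) Hc HE H H0 Hqx Hq5) as Hfin.
  set (kap := Rmin ((5/8)*(1/(1+6*E))*c) (1/2)) in *.
  split.
  - unfold l2_ip.
    change (Im (?a, ?b)) with b. change (Im (Cmult (RtoC kap) (?a, ?b))) with (kap * b + 0 * a).
    rewrite (Series_zero (fun j => Im (Cmult (Cconj (x j)) (x j)))) by (intros n; destruct (x n); simpl; ring).
    rewrite (Series_ext _ (fun j => Im (Cmult (Cconj (x j)) (w j)) + Im (Cmult (Cconj (x j)) (Y x j))))
      by (intros n; unfold w; destruct (x n), (opL k x n), (Y x n); simpl; ring).
    rewrite Series_plus by (apply ex_im; auto).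
    rewrite Himx.
    rewrite (Series_zero (fun j => Im (Cmult (Cconj (x j)) (w j)))).
    + ring.
    + intros n. unfold w, opL. destruct (Nat.ltb n k); destruct (x n); simpl; ring.
  - unfold l2_ip.
    change (Re (Cmult (RtoC kap) (?a, ?b))) with (kap * a - 0 * b). change (Re (?a, ?b)) with a.
    rewrite (Series_ext (fun j => Re (Cmult (Cconj (x j)) (Cplus (w j) (Y x j)))) (fun j => Re (Cmult (Cconj (x j)) (w j)) + Re (Cmult (Cconj (x j)) (Y x j))))
      by (intros n; unfold w; destruct (x n), (opL k x n), (Y x n); simpl; ring).
    rewrite Series_plus by (apply ex_re; auto).
    assert (E1 : Series (fun j => Re (Cmult (Cconj (x j)) (x j))) = Sn x).
    { unfold Sn. apply Series_ext. intros n. rewrite Cmod2. destruct (x n); simpl; ring. }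
    assert (E2 : Series (fun j => Re (Cmult (Cconj (x j)) (w j))) = Sn w).
    { unfold Sn. apply Series_ext. intros n. rewrite Cmod2. unfold w, opL. destruct (Nat.ltb n k); destruct (x n); simpl; ring. }
    rewrite E1, E2. change (Series (fun j => Re (Cmult (Cconj (x j)) (Y x j)))) with (q Y x).
    rewrite HSx. lra.
Qed.
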